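(* If $S\subseteq\{0,1,2\}^m$ and $T\subseteq\{0,1,2\}^{m'}$ are admissible sets, then their direct product $S\times T=\{(s,t): s\in S,t\in T\}\subseteq\{0,1,2\}^{m+m'}$ (with $(s,t)$ the concatenation of $s$ and $t$) is an admissible set.
   Context: A set $S\subseteq\{0,1,2\}^m$ is admissible if (1) for all distinct $s,s'\in S$ there are coordinates $i,j$ with $s_i=0\neq s'_i$ and $s_j\neq 0=s'_j$; and (2) for all distinct $s,s',s''\in S$ there is a coordinate $k$ such that the multiset $\{s_k,s'_k,s''_k\}$ equals $\{0,1,2\}$, $\{0,0,1\}$ or $\{0,0,2\}$. *)

(* Defs.v *)
From mathcomp Require Import all_boot.
Set Implicit Arguments. Unset Strict Implicit. Unset Printing Implicit Defensive.

Definition good_triple (a b c : 'I_3) : bool :=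
  perm_eq [:: val a; val b; val c] [:: 0; 1; 2]
  || perm_eq [:: val a; val b; val c] [:: 0; 0; 1]
  || perm_eq [:: val a; val b; val c] [:: 0; 0; 2].

Definition admissible (m : nat) (S : {set m.-tuple 'I_3}) : Prop :=
  (forall s s', s \in S -> s' \in S -> s != s' ->
     (exists i : 'I_m, val (tnth s i) == 0 /\ val (tnth s' i) != 0) /\
     (exists j : 'I_m, val (tnth s j) != 0 /\ val (tnth s' j) == 0))
  /\
  (forall s s' s'', s \in S -> s' \in S -> s'' \in S ->
     s != s' -> s != s'' -> s' != s'' ->
     exists k : 'I_m, good_triple (tnth s k) (tnth s' k) (tnth s'' k)).

Definition prod_set (m m' : nat) (S : {set m.-tuple 'I_3}) (T : {set m'.-tuple 'I_3})
  : {set (m + m').-tuple 'I_3} :=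
  [set cat_tuple st.1 st.2 | st in [set x | (x.1 \in S) && (x.2 \in T)]].

(* Main.v *)
Require Import Defs.
From mathcomp Require Import all_boot.

Lemma gt_aab (a b : 'I_3) : val a == 0 -> val b != 0 -> good_triple a a b.
Proof. by case: a b => [[|[|[|a]]] Ha] [[|[|[|b]]] Hb]. Qed.
Lemma gt_aba (a b : 'I_3) : val a == 0 -> val b != 0 -> good_triple a b a.
Proof. by case: a b => [[|[|[|a]]] Ha] [[|[|[|b]]] Hb]. Qed.
Lemma gt_baa (a b : 'I_3) : val a == 0 -> val b != 0 -> good_triple b a a.
Proof. by case: a b => [[|[|[|a]]] Ha] [[|[|[|b]]] Hb]. Qed.

Lemma single (m : nat) (S : {set m.-tuple 'I_3}) s s' s'' :
  admissible S -> s \in S -> s' \in S -> s'' \in S ->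
  (s = s' /\ s = s'') \/ exists k : 'I_m, good_triple (tnth s k) (tnth s' k) (tnth s'' k).
Proof.
move=> [H1 H2] Hs Hs' Hs''.
have [e1|n1] := eqVneq s s'; have [e2|n2] := eqVneq s s''; have [e3|n3] := eqVneq s' s''.
- by left.
- by subst; rewrite eqxx in n3.
- by subst; rewrite eqxx in n2.
- subst s'; right; have [[i [a b]] _] := H1 _ _ Hs Hs'' n2; exists i; exact: gt_aab.
- by subst; rewrite eqxx in n1.
- subst s''; right; have [[i [a b]] _] := H1 _ _ Hs Hs' n1; exists i; exact: gt_aba.
- subst s''; right; have n1' : s' != s by rewrite eq_sym. have [[i [a b]] _] := H1 _ _ Hs' Hs n1'; exists i; exact: gt_baa.
- by right; apply: H2.
Qed.

Lemma in_prod (m m' : nat) (S : {set m.-tuple 'I_3}) (T : {set m'.-tuple 'I_3}) u :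
  u \in prod_set S T -> exists s t, [/\ s \in S, t \in T & u = cat_tuple s t].
Proof.
case/imsetP => [[s t]]; rewrite inE /= => /andP [Hs Ht] ->.
by exists s, t.
Qed.

Theorem proposition3p1 (m m' : nat) (S : {set m.-tuple 'I_3}) (T : {set m'.-tuple 'I_3}) :
  admissible S -> admissible T -> admissible (prod_set S T).
Proof.
move=> AS AT; split.
- move=> u u' /in_prod [s [t [Hs Ht ->]]] /in_prod [s2 [t2 [Hs2 Ht2 ->]]] ne.
  have [es|nes] := eqVneq s s2.
    have nt : t != t2.
      by apply: contraNneq ne => et; subst.
    have [[i [a b]] [j [c d]]] := AT.1 _ _ Ht Ht2 nt.
    split; [exists (rshift m i) | exists (rshift m j)];
      by rewrite /cat_tuple !tnth_rshift.
  have [[i [a b]] [j [c d]]] := AS.1 _ _ Hs Hs2 nes.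
  split; [exists (lshift m' i) | exists (lshift m' j)];
    by rewrite /cat_tuple !tnth_lshift.
- move=> u u' u'' /in_prod [s [t [Hs Ht ->]]] /in_prod [s2 [t2 [Hs2 Ht2 ->]]]
    /in_prod [s3 [t3 [Hs3 Ht3 ->]]] n1 n2 n3.
  case: (@single _ _ _ _ _ AS Hs Hs2 Hs3) => [[e1 e2]|[k Hk]]; last first.
    by exists (lshift m' k); rewrite /cat_tuple !tnth_lshift.
  subst s2 s3.
  case: (@single _ _ _ _ _ AT Ht Ht2 Ht3) => [[e1 e2]|[k Hk]]; last first.
    by exists (rshift m k); rewrite /cat_tuple !tnth_rshift.
  by subst; rewrite eqxx in n1.
Qed.
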